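(* For every formula $\phi$, $\vdash_{\mathsf{BB'IW}}\phi$ if and only if $\phi$ is $\Lambda_{\mathrm{NF}}$-inhabited.
   Context: Formulas are built from propositional atoms with $\to$. $\vdash_{\mathsf{BB'IW}}\phi$ means that $\phi$ is derivable by modus ponens from the axioms consisting of all instances of $(\chi\to\psi)\to((\phi\to\chi)\to(\phi\to\psi))$ (${\sf B}$), $(\phi\to\chi)\to((\chi\to\psi)\to(\phi\to\psi))$ (${\sf B'}$), $\phi\to\phi$ (${\sf I}$), $(\phi\to(\phi\to\chi))\to(\phi\to\chi)$ (${\sf W}$); equivalently, some combinator over the basis ${\sf B},{\sf B'},{\sf I},{\sf W}$ has type $\phi$. Let $\mathcal X$ be a countably infinite set of variables with an injective map $\mathcal O:\mathcal X\to\mathbb N$; write $x<y$ iff $\mathcal O(x)<\mathcal O(y)$. Terms are terms of pure $\lambda$-calculus over $\mathcal X$, not identified up to $\alpha$-conversion; two distinct $\lambda$'s never bind the same variable and no variable is both free and bound in a term. HRM terms: every variable; $\lambda x.M$ if $M$ is HRM and $x$ is the greatest free variable of $M$; $(MN)$ if $M,N$ are HRM and for each free variable $x$ of $M$ there is a free variable $y$ of $N$ with $x\le y$. Fix $\Omega$ from variables to formulas with $\Omega^{-1}(\phi)$ infinite for all $\phi$. Typing: $x:\Omega(x)$; if $x:\chi$, $M:\psi$ and $\lambda x.M$ is HRM then $\lambda x.M:\chi\to\psi$; if $M:\chi\to\psi$, $N:\chi$, $(MN)$ HRM then $(MN):\psi$. $\Lambda_{\mathrm{NF}}$ is the set of typed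 terms in $\beta$-normal form; $\phi$ is $\Lambda_{\mathrm{NF}}$-inhabited if some closed term of $\Lambda_{\mathrm{NF}}$ has type $\phi$. *)

(* Defs.v *)
From Stdlib Require Import List.
Import ListNotations.
Set Implicit Arguments.

Inductive form : Type :=
| Atom : nat -> form
| Imp : form -> form -> form.

Inductive provable_BBpIW : form -> Prop :=
| ax_B : forall phi chi psi,
    provable_BBpIW (Imp (Imp chi psi) (Imp (Imp phi chi) (Imp phi psi)))
| ax_B' : forall phi chi psi,
    provable_BBpIW (Imp (Imp phi chi) (Imp (Imp chi psi) (Imp phi psi)))
| ax_I : forall phi, provable_BBpIW (Imp phi phi)
| ax_W : forall phi chi,
    provable_BBpIW (Imp (Imp phi (Imp phi chi)) (Imp phi chi))
| mp : forall phi psi,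
    provable_BBpIW (Imp phi psi) -> provable_BBpIW phi -> provable_BBpIW psi.

(** Raw lambda terms over a variable type X (no alpha-identification). *)
Inductive term (X : Type) : Type :=
| Var : X -> term X
| Lam : X -> term X -> term X
| App : term X -> term X -> term X.
Arguments Var {X}. Arguments Lam {X}. Arguments App {X}.

Section Terms.
Variable X : Type.

Fixpoint fv (M : term X) (x : X) : Prop :=
  match M with
  | Var y => x = y
  | Lam y M' => x <> y /\ fv M' x
  | App M1 M2 => fv M1 x \/ fv M2 x
  end.

Fixpoint bv (M : term X) (x : X) : Prop :=
  match M with
  | Var _ => False
  | Lam y M' => x = y \/ bv M' x
  | App M1 M2 => bv M1 x \/ bv M2 x
  end.

Fixpoint distinct_binders (M : term X) : Prop :=
  match M with
  | Var _ => True
  | Lam y M' => ~ bv M' y /\ distinct_binders M'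
  | App M1 M2 => (forall x, ~ (bv M1 x /\ bv M2 x))
                 /\ distinct_binders M1 /\ distinct_binders M2
  end.

Definition is_term (M : term X) : Prop :=
  distinct_binders M /\ forall x, ~ (fv M x /\ bv M x).

Definition closed (M : term X) : Prop := forall x, ~ fv M x.

Fixpoint beta_normal (M : term X) : Prop :=
  match M with
  | Var _ => True
  | Lam _ M' => beta_normal M'
  | App M1 M2 =>
      (match M1 with Lam _ _ => False | _ => True end)
      /\ beta_normal M1 /\ beta_normal M2
  end.

Variable O : X -> nat.

(** x < y iff O x < O y; HRM terms *)
Inductive HRM : term X -> Prop :=
| HRM_var : forall x, HRM (Var x)
| HRM_lam : forall x M, HRM M ->
    fv M x -> (forall y, fv M y -> O y <= O x) -> HRM (Lam x M)
| HRM_app : forall M N, HRM M -> HRM N ->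
    (forall x, fv M x -> exists y, fv N y /\ O x <= O y) -> HRM (App M N).

Variable Omega : X -> form.

Inductive has_type : term X -> form -> Prop :=
| ty_var : forall x, has_type (Var x) (Omega x)
| ty_lam : forall x M psi, has_type M psi -> HRM (Lam x M) ->
    has_type (Lam x M) (Imp (Omega x) psi)
| ty_app : forall M N chi psi, has_type M (Imp chi psi) -> has_type N chi ->
    HRM (App M N) -> has_type (App M N) psi.

Definition NF_inhabited (phi : form) : Prop :=
  exists M : term X, is_term M /\ closed M /\ beta_normal M /\ has_type M phi.

End Terms.

(* Main.v *)
Require Import Defs.
From Stdlib Require Import List Lia Classical Arith ClassicalEpsilon FinFun.
Module M1.

Section Dir1.
Variable X : Type.
Variable O : X -> nat.
Variable Omega : X -> form.
Hypothesis O_inj : forall x y, O x = O y -> x = y.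
Hypothesis Omega_inf : forall (phi : form) (l : list X),
      exists x, Omega x = phi /\ ~ In x l.

Lemma list_ex A n : exists l : list X, length l = n /\ NoDup l /\ forall x, In x l -> Omega x = A.
Proof.
  induction n as [|n [l [Hl [Hd Ho]]]].
  - exists nil; repeat split; [constructor|intros x []].
  - destruct (Omega_inf A l) as [x [Hx Hn]].
    exists (x :: l); repeat split; simpl; [lia|constructor; auto|].
    intros y [<-|Hy]; auto.
Qed.

Lemma fresh_ex A k : exists x, Omega x = A /\ k <= O x.
Proof.
  destruct (list_ex A (S k)) as [l [Hl [Hd Ho]]].
  apply NNPP; intros Hno.
  assert (Hall : forall x, In x l -> O x < k).
  { intros x Hx. destruct (le_lt_dec k (O x)); [|auto]. exfalso; apply Hno; exists x; auto. }
  assert (Hd' : NoDup (map O l)).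
  { apply FinFun.Injective_map_NoDup; auto. }
  assert (Hi : incl (map O l) (seq 0 k)).
  { intros n Hn. apply in_map_iff in Hn as [x [<- Hx]]. apply in_seq. specialize (Hall x Hx). lia. }
  pose proof (NoDup_incl_length Hd' Hi). rewrite length_map, length_seq in H. lia.
Qed.

Definition fresh (A : form) (k : nat) : X := proj1_sig (constructive_indefinite_description _ (fresh_ex A k)).
Lemma fresh_spec A k : Omega (fresh A k) = A /\ k <= O (fresh A k).
Proof. unfold fresh; destruct constructive_indefinite_description; simpl; auto. Qed.

Definition gen := nat -> (term X * nat).

Fixpoint V (A : form) : Type :=
  match A with Atom _ => gen | Imp A1 B1 => V A1 -> V B1 end.

Fixpoint reify (A : form) {struct A} : V A -> gen :=
  match A return V A -> gen with
  | Atom _ => fun v => v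
  | Imp A1 B1 => fun f k =>
      let x := fresh A1 k in
      let r := reify B1 (f (reflect A1 (fun k0 => (Var x, k0)))) (S (O x)) in
      (Lam x (fst r), snd r)
  end
with reflect (A : form) {struct A} : gen -> V A :=
  match A return gen -> V A with
  | Atom _ => fun g => g
  | Imp A1 B1 => fun g a => reflect B1 (fun k =>
      let r1 := g k in let r2 := reify A1 a (snd r1) in (App (fst r1) (fst r2), snd r2))
  end.

Definition compat (A B : X -> Prop) := forall x, A x -> exists y, B y /\ O x <= O y.
Definition union (A B : X -> Prop) := fun y => A y \/ B y.
Definition neutral (M : term X) := match M with Lam _ _ => False | _ => True end.

Definition good (S : X -> Prop) (A : form) (g : gen) :=
  forall k, (forall y, S y -> O y < k) ->
    let M := fst (g k) in
    k <= snd (g k) /\ (forall y, fv M y <-> S y) /\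
    (forall y, bv M y -> k <= O y < snd (g k)) /\ distinct_binders M /\
    beta_normal M /\ has_type O Omega M A.

Definition goodn S A g := good S A g /\ forall k, (forall y, S y -> O y < k) -> neutral (fst (g k)).

Fixpoint Sem (A : form) : (X -> Prop) -> V A -> Prop :=
  match A return (X -> Prop) -> V A -> Prop with
  | Atom p => fun S v => goodn S (Atom p) v
  | Imp A1 B1 => fun S f => forall T a, Sem A1 T a -> compat S T -> Sem B1 (union S T) (f a)
  end.

Lemma good_ext S T A g : (forall y, S y <-> T y) -> good S A g -> good T A g.
Proof.
  intros E H k Hk. destruct (H k) as (h1&h2&h3); [intros y Hy; apply Hk, E, Hy|].
  split; [auto|split; [intros y; rewrite h2; apply E|auto]].
Qed.

Lemma Sem_ext A : forall S T v, (forall y, S y <-> T y) -> Sem A S v -> Sem A T v.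
Proof.
  induction A as [p|A1 IH1 B1 IH2]; intros S T v E H.
  - destruct H as [H1 H2]. split; [eapply good_ext; eauto|].
    intros k Hk; apply H2; intros y Hy; apply Hk, E, Hy.
  - simpl in *. intros T' a Ha Hc. apply (IH2 (union S T')).
    + intros y; unfold union; rewrite E; tauto.
    + apply H; auto. intros x Hx; apply Hc, E, Hx.
Qed.

Lemma typed_HRM M A : has_type O Omega M A -> HRM O M.
Proof. destruct 1; auto; constructor. Qed.

Lemma rr : forall A, (forall S v, Sem A S v -> good S A (reify A v)) /\
                     (forall S g, goodn S A g -> Sem A S (reflect A g)).
Proof.
  induction A as [p|A1 [IHr1 IHf1] B1 [IHr2 IHf2]].
  - split; simpl; [intros S v [H _]; exact H|auto].
  - split.
    + intros S f Hf k Hk. cbn zeta.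
      set (x := fresh A1 k). destruct (fresh_spec A1 k) as [Ex Kx]. fold x in Ex, Kx.
      assert (Hv : goodn (fun y => y = x) A1 (fun k0 => (Var x, k0))).
      { split.
        - intros k0 Hk0; simpl. split; [auto|]. split; [intros y; simpl; tauto|].
          split; [intros y []|]. split; [exact I|]. split; [exact I|].
          rewrite <- Ex; constructor.
        - intros; exact I. }
      assert (Hc : compat S (fun y => y = x)).
      { intros y Hy; exists x; split; auto. specialize (Hk y Hy); lia. }
      assert (Hs : Sem B1 (union S (fun y => y = x)) (f (reflect A1 (fun k0 => (Var x, k0)))))
        by (apply Hf; [apply IHf1, Hv|exact Hc]).
      specialize (IHr2 _ _ Hs (Datatypes.S (O x))).
      destruct IHr2 as (h1&h2&h3&h4&h5&h6).
      { intros y [Hy|Hy]; [specialize (Hk y Hy); lia|rewrite Hy; lia]. }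
      set (r := reify B1 _ (Datatypes.S (O x))) in *.
      simpl. fold x. fold r. split; [lia|]. split.
      * intros y; simpl; rewrite h2; unfold union; split.
        -- intros [Hne [Hy|Hy]]; [auto|congruence].
        -- intros Hy; split; [intros ->; specialize (Hk x Hy); lia|auto].
      * split; [intros y [->|Hy]; [lia|specialize (h3 y Hy); lia]|].
        split; [split; [intros Hb; specialize (h3 x Hb); lia|auto]|].
        split; [auto|].
        rewrite <- Ex. constructor; auto.
        constructor; [eapply typed_HRM; eauto|apply h2; right; reflexivity|].
        intros y Hy. apply h2 in Hy as [Hy|Hy]; [specialize (Hk y Hy); lia|rewrite Hy; lia].
    + intros S g [Hg Hn]. simpl. intros T a Ha Hc.
      apply IHf2. split.
      * intros k Hk. cbn zeta.
        destruct (Hg k) as (g1&g2&g3&g4&g5&g6); [intros y Hy; apply Hk; left; auto|].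
        pose proof (Hn k (fun y Hy => Hk y (or_introl Hy))) as Hne.
        destruct (IHr1 T a Ha (snd (g k))) as (a1&a2&a3&a4&a5&a6).
        { intros y Hy. specialize (Hk y (or_intror Hy)). lia. }
        simpl. split; [lia|]. split.
        { intros y; simpl; rewrite g2, a2; unfold union; tauto. }
        split.
        { intros y [Hy|Hy]; [specialize (g3 y Hy)|specialize (a3 y Hy)]; lia. }
        split.
        { simpl; split; [|auto]. intros y [Hy1 Hy2]; specialize (g3 y Hy1); specialize (a3 y Hy2); lia. }
        split.
        { simpl. split; [|auto]. destruct (fst (g k)); simpl in *; auto. }
        econstructor; eauto. constructor; [eapply typed_HRM; eauto|eapply typed_HRM; eauto|].
        intros y Hy. apply g2 in Hy. destruct (Hc y Hy) as [z [Hz Hle]].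
        exists z; split; [apply a2; auto|auto].
      * intros k Hk; simpl; exact I.
Qed.

Lemma sound phi : provable_BBpIW phi -> exists v, Sem phi (fun _ => False) v.
Proof.
  induction 1 as [phi chi psi|phi chi psi|phi|phi chi|phi psi H1 [f Hf] H2 [a Ha]].
  - exists (fun (a : V chi -> V psi) (b : V phi -> V chi) (c : V phi) => a (b c)).
    simpl. intros Ta a Ha _ Tb b Hb Hab Tc c Hc Habc.
    apply (Sem_ext psi (union Ta (union Tb Tc))); [unfold union; tauto|].
    apply Ha.
    + apply (Hb Tc c Hc). intros y Hy. apply Habc. unfold union; auto.
    + intros y Hy. destruct (Habc y (or_introl (or_intror Hy))) as [z [Hz Hle]].
      exists z; split; [unfold union; auto|auto].
  - exists (fun (a : V phi -> V chi) (b : V chi -> V psi) (c : V phi) => b (a c)).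
    simpl. intros Ta a Ha _ Tb b Hb Hab Tc c Hc Habc.
    apply (Sem_ext psi (union Tb (union Ta Tc))); [unfold union; tauto|].
    apply Hb.
    + apply (Ha Tc c Hc). intros y Hy. apply Habc. unfold union; auto.
    + intros y Hy. destruct (Habc y (or_intror Hy)) as [z [Hz Hle]].
      exists z; split; [unfold union; auto|auto].
  - exists (fun a : V phi => a). simpl. intros T a Ha _.
    apply (Sem_ext phi T); [unfold union; tauto|exact Ha].
  - exists (fun (f : V phi -> V phi -> V chi) (x : V phi) => f x x).
    simpl. intros Tf f Hf _ Tx x Hx Hc.
    apply (Sem_ext chi (union (union Tf Tx) Tx)); [unfold union; tauto|].
    assert (Hc' : compat Tf Tx) by (intros y Hy; apply Hc; right; exact Hy).
    apply (Hf Tx x Hx Hc' Tx x Hx).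
    intros y [Hy|Hy]; [apply Hc'; auto|exists y; auto].
  - exists (f a). apply (Sem_ext psi (union (fun _ => False) (fun _ => False))); [unfold union; tauto|].
    apply Hf; auto. intros y [].
Qed.

Lemma dir1 phi : provable_BBpIW phi -> NF_inhabited O Omega phi.
Proof.
  intros H. destruct (sound phi H) as [v Hv].
  destruct (proj1 (rr phi) _ v Hv 0) as (h1&h2&h3&h4&h5&h6); [intros y []|].
  exists (fst (reify phi v 0)). repeat split; auto.
  - intros y [Hf _]. apply h2 in Hf; exact Hf.
  - intros y Hf. apply h2 in Hf; exact Hf.
Qed.
End Dir1.

End M1.
Module M2.

Section Dir2.
Variable X : Type.
Variable O : X -> nat.
Variable Omega : X -> form.
Hypothesis O_inj : forall x y, O x = O y -> x = y.

Definition compat (A B : X -> Prop) := forall x, A x -> exists y, B y /\ O x <= O y.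

Lemma compat_total A B : compat A B \/ compat B A.
Proof.
  destruct (classic (compat A B)) as [H|H]; [left; exact H|right].
  unfold compat in H.
  apply not_all_ex_not in H as [x Hx].
  apply imply_to_and in Hx as [Ax Hx].
  intros y By. exists x. split; [exact Ax|].
  destruct (le_lt_dec (O y) (O x)); [assumption|].
  exfalso; apply Hx; exists y; split; [exact By|lia].
Qed.

Inductive cl := CV (x : X) | CB | CB' | CI | CW | CA (p q : cl).

Inductive cty : cl -> form -> Prop :=
| cty_v : forall x, cty (CV x) (Omega x)
| cty_b : forall phi chi psi,
    cty CB (Imp (Imp chi psi) (Imp (Imp phi chi) (Imp phi psi)))
| cty_b' : forall phi chi psi,
    cty CB' (Imp (Imp phi chi) (Imp (Imp chi psi) (Imp phi psi)))
| cty_i : forall phi, cty CI (Imp phi phi)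
| cty_w : forall phi chi, cty CW (Imp (Imp phi (Imp phi chi)) (Imp phi chi))
| cty_a : forall p q a b, cty p (Imp a b) -> cty q a -> cty (CA p q) b.

Fixpoint cfv (M : cl) (x : X) : Prop :=
  match M with
  | CV y => x = y
  | CA p q => cfv p x \/ cfv q x
  | _ => False
  end.

Fixpoint chrm (M : cl) : Prop :=
  match M with
  | CA p q => chrm p /\ chrm q /\ compat (cfv p) (cfv q)
  | _ => True
  end.

Lemma cty_prov M A : cty M A -> (forall y, ~ cfv M y) -> provable_BBpIW A.
Proof.
  induction 1; intros Hc; try (constructor; fail).
  - exfalso; apply (Hc x); reflexivity.
  - eapply mp; [apply IHcty1|apply IHcty2]; intros y Hy; apply (Hc y); simpl; auto.
Qed.

Definition S1 := CA (CA CB (CA CB CW)) (CA (CA CB (CA CB' CB')) CB').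
Definition S2 := CA (CA CB (CA CB CW)) (CA (CA CB CB) CB').

Ltac ct := match goal with
  | |- cty (CA _ _) _ => eapply cty_a; [ct|ct]
  | |- cty CB _ => apply cty_b
  | |- cty CB' _ => apply cty_b'
  | |- cty CW _ => apply cty_w
  | |- cty CI _ => apply cty_i
  end.
Lemma S1_ty a b c : cty S1 (Imp (Imp a (Imp b c)) (Imp (Imp a b) (Imp a c))).
Proof. unfold S1. ct. Qed.
Lemma S2_ty a b c : cty S2 (Imp (Imp a b) (Imp (Imp a (Imp b c)) (Imp a c))).
Proof. unfold S2. ct. Qed.

Lemma S1_h : chrm S1 /\ forall y, ~ cfv S1 y.
Proof. unfold S1; simpl; repeat split; intros z Hz; simpl in *; intuition. Qed.
Lemma S2_h : chrm S2 /\ forall y, ~ cfv S2 y.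
Proof. unfold S2; simpl; repeat split; intros z Hz; simpl in *; intuition. Qed.

Lemma abs_ex : forall M A, cty M A -> chrm M -> forall x, cfv M x ->
  (forall y, cfv M y -> O y <= O x) ->
  exists M', cty M' (Imp (Omega x) A) /\ chrm M' /\
    (forall y, cfv M' y <-> cfv M y /\ y <> x).
Proof.
  induction M as [y| | | | |p IHp q IHq]; intros A HA Hh x Hx Hmax;
    simpl in Hx; try contradiction.
  - subst. inversion HA; subst. exists CI; split; [constructor|]; split; [exact I|].
    intros z; simpl; split; [tauto|intros [? ?]; contradiction].
  - inversion HA as [| | | | |p0 q0 a b Hp Hq]; subst.
    destruct Hh as [hp [hq hc]].
    assert (xq : cfv q x).
    { destruct Hx as [Hx|Hx]; [|exact Hx].
      destruct (hc x Hx) as [y [Hy Hle]].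
      assert (O y <= O x) by (apply Hmax; simpl; auto).
      assert (x = y) by (apply O_inj; lia). subst; exact Hy. }
    destruct (IHq a Hq hq x xq (fun y Hy => Hmax y (or_intror Hy))) as [q' [tq [hq' fq]]].
    destruct (classic (cfv p x)) as [xp|nxp].
    + destruct (IHp (Imp a A) Hp hp x xp (fun y Hy => Hmax y (or_introl Hy))) as [p' [tp [hp' fp]]].
      destruct (compat_total (cfv p') (cfv q')) as [c|c].
      * exists (CA (CA S1 p') q'). split.
        { eapply cty_a; [eapply cty_a; [apply S1_ty|exact tp]|exact tq]. }
        destruct S1_h as [h1 f1]. split.
        { simpl; repeat split; auto; unfold compat in *; simpl in *; firstorder. }
        intros y; simpl. rewrite fp, fq. specialize (f1 y). tauto.
      * exists (CA (CA S2 q') p'). split.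
        { eapply cty_a; [eapply cty_a; [apply S2_ty|exact tq]|exact tp]. }
        destruct S2_h as [h1 f1]. split.
        { simpl; repeat split; auto; unfold compat in *; simpl in *; firstorder. }
        intros y; simpl. rewrite fp, fq. specialize (f1 y). tauto.
    + assert (fp : forall y, cfv p y -> y <> x) by (intros y Hy E; subst; contradiction).
      destruct (compat_total (cfv p) (cfv q')) as [c|c].
      * exists (CA (CA CB p) q'). split.
        { eapply cty_a; [eapply cty_a; [apply cty_b|exact Hp]|exact tq]. }
        split.
        { simpl; repeat split; auto; unfold compat in *; simpl in *; firstorder. }
        intros y; simpl. rewrite fq. specialize (fp y). tauto.
      * exists (CA (CA CB' q') p). split.
        { eapply cty_a; [eapply cty_a; [apply cty_b'|exact tq]|exact Hp]. }
        split.
        { simpl; repeat split; auto; unfold compat in *; simpl in *; firstorder. }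
        intros y; simpl. rewrite fq. specialize (fp y). tauto.
Qed.

Lemma trans_ex : forall M A, has_type O Omega M A ->
  exists N, cty N A /\ chrm N /\ (forall y, cfv N y <-> fv M y).
Proof.
  induction 1 as [x|x M psi HM IH HH|M N chi psi HM IHM HN IHN HH].
  - exists (CV x); split; [constructor|]; split; [exact I|]; intros y; simpl; tauto.
  - destruct IH as [N [tN [hN fN]]].
    inversion HH as [|x0 M0 HM0 Hx Hmax|]; subst.
    destruct (abs_ex N psi tN hN x (proj2 (fN x) Hx) (fun y Hy => Hmax y (proj1 (fN y) Hy))) as [M' [t' [h' f']]].
    exists M'; split; [exact t'|]; split; [exact h'|].
    intros y; rewrite f', fN; simpl; tauto.
  - destruct IHM as [N1 [t1 [h1 f1]]]. destruct IHN as [N2 [t2 [h2 f2]]].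
    inversion HH as [| |M0 N0 HM0 HN0 Hc]; subst.
    exists (CA N1 N2); split; [econstructor; eauto|]; split.
    + simpl; repeat split; auto. intros z Hz. apply f1 in Hz.
      destruct (Hc z Hz) as [y [Hy Hle]]. exists y; split; [apply f2, Hy|exact Hle].
    + intros y; simpl; rewrite f1, f2; tauto.
Qed.

Lemma dir2 phi : NF_inhabited O Omega phi -> provable_BBpIW phi.
Proof.
  intros [M [_ [Hcl [_ Hty]]]].
  destruct (trans_ex M phi Hty) as [N [tN [_ fN]]].
  apply (cty_prov N phi tN). intros y Hy. apply fN in Hy. exact (Hcl y Hy).
Qed.
End Dir2.

End M2.

Theorem lemma1p10 (X : Type) (O : X -> nat) (Omega : X -> form)
  (X_countably_infinite : exists f : nat -> X,
      (forall m n, f m = f n -> m = n) /\ (forall x, exists n, f n = x))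
  (O_inj : forall x y, O x = O y -> x = y)
  (Omega_inf : forall (phi : form) (l : list X),
      exists x, Omega x = phi /\ ~ In x l) :
  forall phi : form, provable_BBpIW phi <-> NF_inhabited O Omega phi.
Proof.
  intros phi; split.
  - apply (M1.dir1 X O Omega O_inj Omega_inf).
  - apply (M2.dir2 X O Omega O_inj).
Qed.
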